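(* Let $P\subseteq\mathrm{Act}^\omega$ and let $L_a,L_r\subseteq\mathrm{Act}^*$ be sets of finite traces (the traces accepted, resp. rejected, by some monitor) such that: (1) verdicts are irrevocable: $L_a$ and $L_r$ are closed under finite extensions ($s\in L_a$ implies $ss'\in L_a$ for all $s'\in\mathrm{Act}^*$, and likewise for $L_r$); (2) soundness: for every $t\in\mathrm{Act}^\omega$, if some finite prefix of $t$ is in $L_r$ then $t\notin P$, and if some finite prefix of $t$ is in $L_a$ then $t\in P$; (3) completeness: every $t\in P$ has a finite prefix in $L_a$ and every $t\in\mathrm{Act}^\omega\setminus P$ has a finite prefix in $L_r$. Then there is a closed recursion-free formula $\varphi$ (built only from $\mathrm{tt},\mathrm{ff},\wedge,\vee,[A],\langle A\rangle$) with $[\![\varphi]\!]_L=P$.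
   Context: $\mathrm{Act}$ is a finite set of actions. Linear-time semantics over $\mathrm{Act}^\omega$ for recursion-free formulae $\varphi::=\mathrm{tt}\mid\mathrm{ff}\mid\varphi\vee\varphi\mid\varphi\wedge\varphi\mid\langle A\rangle\varphi\mid[A]\varphi$ ($A\subseteq\mathrm{Act}$): $[\![\mathrm{tt}]\!]_L=\mathrm{Act}^\omega$, $[\![\mathrm{ff}]\!]_L=\emptyset$, $\vee,\wedge$ union/intersection, $[\![\langle A\rangle\varphi]\!]_L=\{at\mid a\in A,t\in[\![\varphi]\!]_L\}$, $[\![[A]\varphi]\!]_L=\{t\mid\forall a\in A,\forall t'.\ t=at'\Rightarrow t'\in[\![\varphi]\!]_L\}$. *)

(* Defs.v *)
From mathcomp Require Import all_boot.
Set Implicit Arguments. Unset Strict Implicit. Unset Printing Implicit Defensive.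

Definition itrace (Act : Type) := nat -> Act.

Definition itail (Act : Type) (t : itrace Act) : itrace Act := fun i => t i.+1.

Definition iprefix (Act : Type) (t : itrace Act) (n : nat) : seq Act :=
  [seq t i | i <- iota 0 n].

Inductive rform (Act : finType) : Type :=
| RTt : rform Act
| RFf : rform Act
| ROr : rform Act -> rform Act -> rform Act
| RAnd : rform Act -> rform Act -> rform Act
| RDia : {set Act} -> rform Act -> rform Act
| RBox : {set Act} -> rform Act -> rform Act.

Fixpoint lsem (Act : finType) (phi : rform Act) (t : itrace Act) : Prop :=
  match phi with
  | RTt => True
  | RFf => False
  | ROr p q => lsem p t \/ lsem q t
  | RAnd p q => lsem p t /\ lsem q t
  | RDia A p => t 0 \in A /\ lsem p (itail t)
  | RBox A p => t 0 \in A -> lsem p (itail t)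
  end.

(* Main.v *)
Require Import Defs.
From mathcomp Require Import all_boot.
From Stdlib Require Import Classical ClassicalEpsilon.

Lemma iprefixS (Act : Type) (t : itrace Act) n :
  iprefix t n.+1 = rcons (iprefix t n) (t n).
Proof. by rewrite /iprefix -addn1 iotaD add0n /= map_cat cats1. Qed.

Lemma iprefixS' (Act : Type) (t : itrace Act) n :
  iprefix t n.+1 = t 0 :: iprefix (itail t) n.
Proof.
rewrite /iprefix /= -(addn0 1) iotaDl -map_comp.
by congr (_ :: _); apply: eq_map => i /=; rewrite /itail add1n.
Qed.

Lemma size_iprefix (Act : Type) (t : itrace Act) n : size (iprefix t n) = n.
Proof. by rewrite /iprefix size_map size_iota. Qed.

Section Form.
Variable Act : finType.

Lemma step_list (n : nat) (Q : seq Act -> Prop)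
  (IH : forall a : Act, exists phi : rform Act,
          forall t, lsem phi t <-> Q (a :: iprefix t n)) (l : seq Act) :
  exists phi : rform Act, forall t, lsem phi t <-> (t 0 \in l -> Q (iprefix t n.+1)).
Proof.
elim: l => [|a l [phl Hl]].
  by exists (RTt Act) => t /=; split.
have [pha Ha] := IH a.
exists (RAnd (RBox [set a] pha) phl) => t /=; rewrite Hl Ha in_set1 in_cons iprefixS'.
split.
  move=> [H1 H2] /orP [/eqP E|E]; last exact: H2.
  by rewrite E; apply: H1; rewrite E.
move=> H; split => E; first by move/eqP: (E) => E1; rewrite -E1; apply: H; rewrite E.
by apply: H; rewrite E orbT.
Qed.

Lemma form_exists n : forall Q : seq Act -> Prop,
  exists phi : rform Act, forall t, lsem phi t <-> Q (iprefix t n).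
Proof.
elim: n => [|n IH] Q.
  case: (classic (Q [::])) => HQ.
    by exists (RTt Act) => t /=; split.
  by exists (RFf Act) => t /=; split.
have IHa : forall a : Act, exists phi : rform Act,
    forall t, lsem phi t <-> Q (a :: iprefix t n).
  move=> a; exact: (IH (fun w => Q (a :: w))).
have [phi Hphi] := @step_list n Q IHa (enum Act).
by exists phi => t; rewrite Hphi mem_enum; split => // H; apply: H.
Qed.
End Form.

Theorem mainTheorem18 (Act : finType) (P : itrace Act -> Prop)
  (La Lr : seq Act -> Prop)
  (irrev_a : forall s s', La s -> La (s ++ s'))
  (irrev_r : forall s s', Lr s -> Lr (s ++ s'))
  (sound_r : forall t : itrace Act, (exists n, Lr (iprefix t n)) -> ~ P t)
  (sound_a : forall t : itrace Act, (exists n, La (iprefix t n)) -> P t)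
  (compl_a : forall t : itrace Act, P t -> exists n, La (iprefix t n))
  (compl_r : forall t : itrace Act, ~ P t -> exists n, Lr (iprefix t n)) :
  exists phi : rform Act, forall t : itrace Act, lsem phi t <-> P t.
Proof.
pose G s m := forall s' : seq Act, size s' = m -> La (s ++ s') \/ Lr (s ++ s').
have mono : forall s m m', m <= m' -> G s m -> G s m'.
  move=> s m m' le H s' Hs.
  rewrite -(cat_take_drop m s') catA.
  have [] := H (take m s'); first by rewrite size_take Hs; case: ltngtP le.
    by left; apply: irrev_a.
  by right; apply: irrev_r.
pose B s := ~ exists m, G s m.
have stepB : forall s, B s -> exists a, B (rcons s a).
  move=> s Bs; apply: NNPP => Hn.
  have Hall : forall a, exists m, G (rcons s a) m.
    by move=> a; apply: NNPP => Hna; apply: Hn; exists a.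
  have : forall l : seq Act, exists M, forall a, a \in l -> G (rcons s a) M.
    elim=> [|a l [M HM]]; first by exists 0.
    have [ma Ha] := Hall a.
    exists (maxn ma M) => b; rewrite in_cons => /orP [/eqP ->|bl].
      by apply: (mono _ ma) => //; rewrite leq_maxl.
    by apply: (mono _ M); [rewrite leq_maxr | apply: HM].
  move=> /(_ (enum Act)) [M HM]; apply: Bs; exists M.+1.
  case=> [|a s'] //= [Hs].
  by have := HM a (mem_enum _ a) s' Hs; rewrite cat_rcons.
have [N HN] : exists N, G [::] N.
  apply: NNPP => HB.
  have [a0 _] := stepB _ HB.
  have ex : forall s, exists a, B s -> B (rcons s a).
    move=> s; case: (classic (B s)) => Hs.
      by have [a Ha] := stepB _ Hs; exists a.
    by exists a0.
  pose f s := proj1_sig (constructive_indefinite_description _ (ex s)).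
  have fP : forall s, B s -> B (rcons s (f s)).
    by move=> s; rewrite /f; case: constructive_indefinite_description.
  pose w := fix w n := if n is n'.+1 then rcons (w n') (f (w n')) else [::].
  pose t : itrace Act := fun i => f (w i).
  have wt : forall n, iprefix t n = w n.
    by elim=> [|n IH] //; rewrite iprefixS IH.
  have Bw : forall n, B (w n) by elim=> [|n IH] //=; apply: fP.
  have bad : forall n, ~ La (w n) /\ ~ Lr (w n).
    move=> n; split=> H; apply: (Bw n); exists 0; case=> // _; rewrite cats0.
      by left.  by right.
  case: (classic (P t)) => Pt.
    by have [n Hn] := compl_a t Pt; rewrite wt in Hn; case: (bad n).
  by have [n Hn] := compl_r t Pt; rewrite wt in Hn; case: (bad n).
have [phi Hphi] := @form_exists Act N La.
exists phi => t; rewrite Hphi; split => H.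
  by apply: sound_a; exists N.
case: (HN (iprefix t N)); first exact: size_iprefix.
  by [].
move=> Hr; exfalso; apply: (sound_r t) => //; by exists N.
Qed.
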